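(* Let $(X,\|\cdot\|_X)$ be a Banach space and $\mathcal{K}\subset X$. Then $\mathcal{K}$ is totally bounded if and only if for every $n\ge1$ one has $\lim_{\gamma\to\infty}d_n^\gamma(\mathcal{K})_X=0$.
   Context: $\mathcal{K}$ is totally bounded if for every $\varepsilon>0$ it is covered by finitely many closed balls of radius $\varepsilon$. For $k\ge1$ and a norm $\|\cdot\|_{Y_k}$ on $\mathbb{R}^k$ let $B_{Y_k}=\{y\in\mathbb{R}^k:\|y\|_{Y_k}\le1\}$. For $\gamma\ge0$, the fixed Lipschitz width is $d^\gamma(\mathcal{K},Y_k)_X=\inf_{\Phi}\sup_{f\in\mathcal{K}}\inf_{y\in B_{Y_k}}\|f-\Phi(y)\|_X\in[0,\infty]$, the infimum being over all maps $\Phi:B_{Y_k}\to X$ with $\|\Phi(y)-\Phi(y')\|_X\le\gamma\|y-y'\|_{Y_k}$ for all $y,y'\in B_{Y_k}$. The Lipschitz width is $d_n^\gamma(\mathcal{K})_X=\inf_{1\le k\le n}\inf_{\|\cdot\|_{Y_k}}d^\gamma(\mathcal{K},Y_k)_X$, where the inner infimum is over all norms on $\mathbb{R}^k$. *)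

(* Defs.v *)
From HB Require Import structures.
From mathcomp Require Import all_boot all_order all_algebra.
From mathcomp Require Import all_classical all_reals all_analysis.
Set Implicit Arguments. Unset Strict Implicit. Unset Printing Implicit Defensive.
Import Order.TTheory GRing.Theory Num.Theory.
Import numFieldNormedType.Exports.
Local Open Scope classical_set_scope.
Local Open Scope ring_scope.

Definition tot_bounded (R : realType) (X : normedModType R) (K : set X) : Prop :=
  forall eps : R, 0 < eps ->
    exists s : seq X, K `<=` [set x | exists2 c, c \in s & `|x - c| <= eps].

Definition is_norm (R : realType) (k : nat) (N : 'rV[R]_k -> R) : Prop :=
  [/\ forall y, 0 <= N y,
      forall y, N y = 0 -> y = 0,
      forall (a : R) y, N (a *: y) = `|a| * N y
    & forall y y', N (y + y') <= N y + N y'].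

Definition unit_ballN (R : realType) (k : nat) (N : 'rV[R]_k -> R) : set 'rV[R]_k :=
  [set y | N y <= 1].

Definition lip_on_ball (R : realType) (X : normedModType R) (k : nat)
  (N : 'rV[R]_k -> R) (gamma : R) (Phi : 'rV[R]_k -> X) : Prop :=
  forall y y', y \in unit_ballN N -> y' \in unit_ballN N ->
    `|Phi y - Phi y'| <= gamma * N (y - y').

(* sup_{f in K} inf_{y in B} ||f - Phi y||, in [0, +oo]
   (0 is added to the sup so that the empty K gives 0, as in [0,oo]). *)
Definition lip_err (R : realType) (X : normedModType R) (K : set X) (k : nat)
  (N : 'rV[R]_k -> R) (Phi : 'rV[R]_k -> X) : \bar R :=
  ereal_sup ([set 0%E] `|`
    [set ereal_inf [set (`|f - Phi y|)%:E | y in unit_ballN N] | f in K]).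

Definition fixed_lipw (R : realType) (X : normedModType R) (K : set X) (k : nat)
  (N : 'rV[R]_k -> R) (gamma : R) : \bar R :=
  ereal_inf [set lip_err K N Phi | Phi in [set Phi | lip_on_ball N gamma Phi]].

Definition lipw (R : realType) (X : normedModType R) (K : set X) (n : nat)
  (gamma : R) : \bar R :=
  ereal_inf [set e | exists k : nat, [/\ (1 <= k)%N, (k <= n)%N &
     exists N : 'rV[R]_k -> R, is_norm N /\ e = fixed_lipw K N gamma]].

(* Main.v *)
Require Import Defs.
From HB Require Import structures.
From mathcomp Require Import all_boot all_order all_algebra.
From mathcomp Require Import all_classical all_reals all_analysis.
From mathcomp Require Import ring lra.
Import Order.TTheory GRing.Theory Num.Theory Num.Def.
Import numFieldNormedType.Exports.
Local Open Scope classical_set_scope.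
Local Open Scope ring_scope.
Set Implicit Arguments. Unset Strict Implicit.

Definition N1 (R : realType) : 'rV[R]_1 -> R := fun y => `|y ord0 ord0|.

Lemma N1_norm (R : realType) : is_norm (@N1 R).
Proof.
rewrite /N1; split.
- by move=> y.
- move=> y /normr0_eq0 y0; apply/rowP => i; by rewrite ord1 mxE.
- by move=> a y; rewrite mxE normrM.
- by move=> y y'; rewrite mxE ler_normD.
Qed.

Lemma max0_lip (R : realType) (a b : R) : `|maxr 0 a - maxr 0 b| <= `|a - b|.
Proof.
case: (leP 0 a) => ha; case: (leP 0 b) => hb.
- by [].
- rewrite subr0 (ger0_norm ha) ger0_norm; lra.
- rewrite sub0r normrN (ger0_norm hb) ler0_norm; lra.
- by rewrite subrr normr0.
Qed.

Lemma lipw_ge0 (R : realType) (X : normedModType R) (K : set X) n gamma :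
  (0 <= lipw K n gamma)%E.
Proof.
apply: le_ereal_inf_tmp => e [k [_ _ [N [_ ->]]]].
apply: le_ereal_inf_tmp => e' [Phi _ <-].
by apply: ereal_sup_ubound; left.
Qed.

Lemma near_pinfty (R : realType) (P : R -> Prop) (M : R) :
  (forall x, M < x -> P x) -> \forall x \near +oo, P x.
Proof. by move=> H; exists M; split => //; exact: num_real. Qed.

Lemma fwd_key (R : realType) (X : normedModType R) (K : set X) n :
  (1 <= n)%N -> tot_bounded K -> forall eps : R, 0 < eps ->
  exists M : R, forall gamma, M < gamma -> (lipw K n gamma <= eps%:E)%E.
Proof.
move=> n1 tb eps eps0.
have [s Hs] := tb eps eps0.
pose m := size s.
pose g (i : nat) (t : R) := maxr 0 (1 - `|m%:R * t - i%:R|).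
pose Phi (y : 'rV[R]_1) : X := \sum_(i < m) g i (y ord0 ord0) *: s`_i.
pose C := \sum_(i < m) `|s`_i|.
exists (m%:R * C) => gamma Hg.
have C0 : 0 <= C by apply: sumr_ge0 => i _.
have glip i t t' : `|g i t - g i t'| <= m%:R * `|t - t'|.
  rewrite /g; apply: (le_trans (max0_lip _ _)).
  have E1 : forall a b : R, (1 - a) - (1 - b) = b - a by move=> a b; ring.
  rewrite E1; apply: (le_trans (ler_dist_dist _ _)).
  have E2 : forall a b c : R, (a - c) - (b - c) = a - b by move=> a b c; ring.
  by rewrite E2 -mulrBr normrM ger0_norm // distrC.
have lipP : lip_on_ball (@N1 R) gamma Phi.
  move=> y y' _ _.
  rewrite /Phi -sumrB.
  under eq_bigr do rewrite -scalerBl.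
  apply: le_trans (ler_norm_sum _ _ _) _.
  apply: (@le_trans _ _ (\sum_(i < m) (m%:R * `|y ord0 ord0 - y' ord0 ord0|) * `|s`_i|)).
    apply: ler_sum => i _; rewrite normrZ; apply: ler_wpM2r => //.
  rewrite -mulr_sumr /N1 !mxE [X in X <= _]mulrAC.
  by apply: ler_wpM2r => //; apply: ltW.
apply: (@le_trans _ _ (fixed_lipw K (@N1 R) gamma)).
  apply: ereal_inf_lbound; exists 1%N; split => //.
  by exists (@N1 R); split => //; exact: N1_norm.
apply: (@le_trans _ _ (lip_err K (@N1 R) Phi)).
  by apply: ereal_inf_lbound; exists Phi.
apply: ge_ereal_sup => x [-> | [f Kf <-]]; first by rewrite lee_fin ltW.
have [c cs fc] := Hs f Kf.
pose i := index c s.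
have im : (i < m)%N by rewrite index_mem.
have m0 : (0 < m)%N by apply: leq_ltn_trans im.
have mn0 : (m%:R : R) != 0 by rewrite pnatr_eq0 -lt0n.
pose yi : 'rV[R]_1 := const_mx (i%:R / m%:R).
apply: ge_ereal_inf; exists (`|f - Phi yi|)%:E.
  exists yi => //. rewrite /unit_ballN /N1 /yi /= mxE ger0_norm ?divr_ge0 //.
  by rewrite ler_pdivrMr ?ltr0n // mul1r ler_nat ltnW.
rewrite lee_fin.
suff E : Phi yi = c by rewrite E.
rewrite /Phi (bigD1 (Ordinal im)) // big1 ?addr0.
  rewrite /g /yi mxE [_ * (_ / _)]mulrC divfK // subrr normr0 subr0.
  rewrite max_r ?ler01 // scale1r.
  have -> : s`_(Ordinal im) = c by exact: nth_index.
  by rewrite [LHS]/= addr0.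
move=> j /andP[_ /eqP hj]; rewrite /g /yi mxE [_ * (_ / _)]mulrC divfK //.
have hij : i <> j by move=> e; apply: hj; apply: val_inj.
have H1 : 1 <= `|i%:R - j%:R| :> R.
  case: (ltngtP i j) => h; last by [].
    rewrite ler0_norm; last by rewrite subr_le0 ler_nat ltnW.
    have : (i.+1)%:R <= j%:R :> R by rewrite ler_nat.
    rewrite -addn1 natrD opprB; lra.
  rewrite ger0_norm; last by rewrite subr_ge0 ler_nat ltnW.
  have : (j.+1)%:R <= i%:R :> R by rewrite ler_nat.
  rewrite -addn1 natrD; lra.
rewrite max_l; first exact: scale0r.
by rewrite subr_le0.
Qed.

Lemma fin_of_bnd (R : realType) (v : \bar R) (r : R) :
  (0 <= v)%E -> (v <= r%:E)%E -> v \is a fin_num.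
Proof. by move=> h0 h1; rewrite ge0_fin_numE // (le_lt_trans h1) ?ltry. Qed.

Lemma fwd (R : realType) (X : normedModType R) (K : set X) n :
  (1 <= n)%N -> tot_bounded K ->
  (fun gamma : R => lipw K n gamma) @ +oo --> (0 : \bar R).
Proof.
move=> n1 tb; apply/fine_cvgP; split.
  have [M HM] := @fwd_key R X K n n1 tb 1 ltr01.
  apply: (@near_pinfty _ _ M) => x Hx.
  exact: (@fin_of_bnd R _ 1 (lipw_ge0 K n x) (HM x Hx)).
apply/cvgrPdist_le => eps eps0.
have [M HM] := @fwd_key R X K n n1 tb eps eps0.
apply: (@near_pinfty _ _ M) => x Hx /=.
have hf := fin_of_bnd (lipw_ge0 K n x) (HM x Hx).
have := HM x Hx; have := lipw_ge0 K n x.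
rewrite -(fineK hf) !lee_fin sub0r normrN => h0 h1.
by rewrite ger0_norm.
Qed.

Lemma bwd (R : realType) (X : normedModType R) (K : set X) :
  (fun gamma : R => lipw K 1 gamma) @ +oo --> (0 : \bar R) -> tot_bounded K.
Proof.
move=> H eps eps0.
have e2 : 0 < eps / 2 by rewrite divr_gt0.
case/fine_cvgP: H => Hfin /cvgrPdist_lt /(_ _ e2) Hc.
case: Hfin => M1 [_ HM1]; case: Hc => M2 [_ HM2].
pose gamma := Num.max (Num.max M1 M2) 0 + 1.
have m1 : M1 <= Num.max (Num.max M1 M2) 0 by rewrite !le_max lexx.
have m2 : M2 <= Num.max (Num.max M1 M2) 0 by rewrite !le_max lexx orbT.
have m0 : 0 <= Num.max (Num.max M1 M2) 0 by rewrite !le_max lexx orbT.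
have g1 : M1 < gamma by rewrite /gamma; lra.
have g2 : M2 < gamma by rewrite /gamma; lra.
have g0 : 0 < gamma by rewrite /gamma; lra.
have hv : (lipw K 1 gamma < (eps / 2)%:E)%E.
  have hf := HM1 gamma g1.
  have := HM2 gamma g2; rewrite -(fineK hf) lte_fin sub0r normrN.
  exact: le_lt_trans (ler_norm _).
have [e [k [k1 k1' [N [Nn ->]]]] He] := ereal_inf_lt hv.
have k1E : k = 1%N by apply/eqP; rewrite eqn_leq k1 k1'.
subst k.
have [e' [Phi Phil <-] He'] := ereal_inf_lt He.
case: Nn => N0 Nz NZ Ntri.
pose e1 : 'rV[R]_1 := const_mx 1.
have yE (y : 'rV[R]_1) : y = y ord0 ord0 *: e1.
  by apply/rowP => i; rewrite ord1 !mxE mulr1.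
have Ne0 : 0 < N e1.
  rewrite lt_def N0 andbT; apply/negP => /eqP /Nz /rowP /(_ ord0).
  by rewrite !mxE; apply/eqP; exact: oner_neq0.
have NyE (y : 'rV[R]_1) : N y = `|y ord0 ord0| * N e1 by rewrite {1}(yE y) NZ.
pose L := 1 / N e1.
pose d := eps / 2 / (gamma * N e1).
have d0 : 0 < d by rewrite /d divr_gt0 // mulr_gt0.
have inB (t : R) : t \in `[-L, L] -> unit_ballN N (t *: e1).
  rewrite in_itv /= -ler_norml /unit_ballN /= NZ /L ler_pdivlMr //.
have := @segment_compact R (-L) L; rewrite compact_cover => /(_ R `[-L, L]%classic (fun t => ball t d)).
case.
- by move=> i _; exact: ball_open.
- by move=> t Dt; exists t => //; exact: ballxx.
move=> D' D'sub Hcov.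
exists [seq Phi (t *: e1) | t <- finmap.enum_fset D'] => f Kf /=.
have hinf : (ereal_inf [set (`|f - Phi y|)%:E | y in unit_ballN N] < (eps / 2)%:E)%E.
  apply: le_lt_trans He'; apply: ereal_sup_ubound; right; by exists f.
have [_ [y yB <-] hy] := ereal_inf_lt hinf.
rewrite lte_fin in hy.
pose t := y ord0 ord0.
have tD : `[- L, L]%classic t.
  rewrite /= in_itv /= -ler_norml /L ler_pdivlMr // -NyE.
  exact: yB.
have [t' t'D' bt] := Hcov t tD.
rewrite /ball /= in bt.
have t'B : unit_ballN N (t' *: e1).
  apply: inB; have := D'sub t' t'D'; by rewrite inE.
exists (Phi (t' *: e1)); first by apply: map_f.
apply: (le_trans (ler_distD (Phi y) _ _)).
have hP := Phil y (t' *: e1) (mem_set yB) (mem_set t'B).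
rewrite NyE !mxE mulr1 in hP.
have : gamma * (`|t - t'| * N e1) < eps / 2.
  have -> : eps / 2 = gamma * N e1 * d.
    by rewrite /d [RHS]mulrC divfK // gt_eqF // mulr_gt0.
  by rewrite (mulrC `|_|) mulrA distrC ltr_pM2l ?mulr_gt0.
move=> hlt.
have := le_lt_trans hP hlt.
rewrite /t in hy.
move: hy; lra.
Qed.

Unset Implicit Arguments.

Theorem lemma2p6 (R : realType) (X : completeNormedModType R) (K : set X) :
  tot_bounded K <->
  (forall n : nat, (1 <= n)%N ->
     (fun gamma : R => lipw K n gamma) @ +oo --> (0 : \bar R)).
Proof.
split.
- by move=> tb n n1; exact: fwd.
- by move=> H; apply: bwd; exact: H.
Qed.
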